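(* Let $\mathbb{F}$ be a field and $0\neq h\in\mathbb{F}[x]$, and let $A=A_h$ be the unital $\mathbb{F}$-algebra generated by $x,\hat y$ with $\hat yx-x\hat y=h$. Then $[\mathbb{F}[x],A]=[x,A]$.
   Context: For subsets $S,T$ of $A$, $[S,T]$ denotes the $\mathbb{F}$-linear span of all commutators $[s,t]=st-ts$ with $s\in S,t\in T$; $[x,A]=\{[x,a]:a\in A\}$. *)

(* Defs.v *)
From HB Require Import structures.
From mathcomp Require Import all_boot all_order all_algebra.
Set Implicit Arguments. Unset Strict Implicit. Unset Printing Implicit Defensive.
Import Order.TTheory GRing.Theory Num.Theory.
Local Open Scope ring_scope.

(* The algebra A_h = F<x, yhat | yhat x - x yhat = h> is realised concretely
   as the Ore extension F[x][yhat; D] with D = h * d/dx, using its normal form: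
   an element is  sum_j p_j(x) yhat^j,  represented by the polynomial
   p : {poly {poly F}} whose j-th coefficient p`_j is p_j (coefficients on the
   left of powers of yhat).  *)
Section Ah.
Variable F : fieldType.
Variable h : {poly F}.

(* the derivation D g = h g' of F[x], so that yhat g = g yhat + D g *)
Definition Dh (g : {poly F}) : {poly F} := h * g^`().

(* multiplication on normal forms:
   (f yhat^i)(g yhat^j) = sum_k C(i,k) f D^k(g) yhat^(i-k+j) *)
Definition Amul (p q : {poly {poly F}}) : {poly {poly F}} :=
  \sum_(i < size p) \sum_(j < size q) \sum_(k < i.+1)
     ((p`_i * ('C(i, k)%:R * iter k Dh q`_j))%:P * 'X^(i - k + j)).

Definition Acomm (a b : {poly {poly F}}) : {poly {poly F}} :=
  Amul a b - Amul b a.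

Definition Ax : {poly {poly F}} := ('X : {poly F})%:P.
Definition Apoly (f : {poly F}) : {poly {poly F}} := f%:P.

Definition comm_span (S T : {poly {poly F}} -> Prop) (b : {poly {poly F}}) : Prop :=
  exists n (c : 'I_n -> F) (s t : 'I_n -> {poly {poly F}}),
    (forall i, S (s i) /\ T (t i)) /\
    b = \sum_(i < n) (c i)%:P%:P * Acomm (s i) (t i).

End Ah.

(* Main.v *)
Require Import Defs.
From HB Require Import structures.
From mathcomp Require Import all_boot all_order all_algebra.
From mathcomp Require Import ring.
Import GRing.Theory.
Local Open Scope ring_scope.

Section Helpers.
Variable F : fieldType.
Variable h : {poly F}.

Local Notation D := (Dh h).

Lemma D0 : D 0 = 0.
Proof. by rewrite /Dh deriv0 mulr0. Qed.

Lemma DD f g : D (f + g) = D f + D g.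
Proof. by rewrite /Dh derivD mulrDr. Qed.

Lemma DM f g : D (f * g) = D f * g + f * D g.
Proof. by rewrite /Dh derivM mulrDr mulrA; congr (_ + _); rewrite mulrCA. Qed.

Lemma DC c : D c%:P = 0.
Proof. by rewrite /Dh derivC mulr0. Qed.

Lemma iterD0 k : iter k D 0 = 0.
Proof. by elim: k => //= k ->; rewrite D0. Qed.

Lemma iterDD k f g : iter k D (f + g) = iter k D f + iter k D g.
Proof. by elim: k => //= k ->; rewrite DD. Qed.

Definition Gt (f : {poly F}) (q : {poly {poly F}}) (i k : nat) : {poly {poly F}} :=
  (q`_i * ('C(i, k)%:R * iter k D f))%:P * 'X^(i - k).

Definition RB N (f : {poly F}) (q : {poly {poly F}}) := \sum_(i < N) \sum_(k < N) Gt f q i k.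
Definition R (f : {poly F}) (q : {poly {poly F}}) := RB (size q) f q.

Lemma widen0 (V : zmodType) (G : nat -> V) (n1 n2 : nat) :
  (n1 <= n2)%N -> (forall k : nat, (n1 <= k)%N -> G k = 0) ->
  \sum_(k < n1) G k = \sum_(k < n2) G k.
Proof.
move=> le12 HG; rewrite (big_ord_widen _ _ le12) big_mkcond /=.
apply: eq_bigr => k _; case: ifP => // /negbT; rewrite -leqNgt => /HG ->.
by [].
Qed.

Arguments widen0 {V} G {n1 n2}.

Lemma Gt_zero1 (f : {poly F}) (q : {poly {poly F}}) (i k : nat) : (size q <= i)%N -> Gt f q i k = 0.
Proof. by move=> H; rewrite /Gt nth_default // mul0r polyC0 mul0r. Qed.

Lemma Gt_zero2 (f : {poly F}) (q : {poly {poly F}}) (i k : nat) : (i < k)%N -> Gt f q i k = 0.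
Proof. by move=> H; rewrite /Gt bin_small // mul0r mulr0 polyC0 mul0r. Qed.

Lemma RB_R (N : nat) (f : {poly F}) (q : {poly {poly F}}) : (size q <= N)%N -> RB N f q = R f q.
Proof.
move=> H; rewrite /R /RB.
rewrite -(widen0 (fun i => \sum_(k < N) Gt f q i k) H); last first.
  by move=> k Hk; apply: big1 => j _; apply: Gt_zero1.
apply: eq_bigr => i _; symmetry; apply: widen0 => // k Hk.
by apply: Gt_zero2; apply: leq_trans Hk.
Qed.

Arguments RB_R {N} f {q}.

Lemma R0q (f : {poly F}) : R f 0 = 0.
Proof. by rewrite /R /RB size_poly0 big_ord0. Qed.

Lemma R0f q : R 0 q = 0.
Proof.
rewrite /R /RB; apply: big1 => i _; apply: big1 => k _.
by rewrite /Gt iterD0 mulr0 mulr0 polyC0 mul0r.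
Qed.

Lemma Radd (f : {poly F}) p q : R f (p + q) = R f p + R f q.
Proof.
have Hp : (size p <= maxn (size p) (size q))%N by rewrite leq_maxl.
have Hq : (size q <= maxn (size p) (size q))%N by rewrite leq_maxr.
have Hpq : (size (p + q)%R <= maxn (size p) (size q))%N by apply: size_polyD.
rewrite -(RB_R f Hp) -(RB_R f Hq) -(RB_R f Hpq) /RB -big_split.
apply: eq_bigr => i _; rewrite -big_split; apply: eq_bigr => k _.
by rewrite /Gt coefD mulrDl polyCD mulrDl.
Qed.

Lemma Rfadd (f : {poly F}) g q : R (f + g) q = R f q + R g q.
Proof.
rewrite /R /RB -big_split; apply: eq_bigr => i _; rewrite -big_split.
apply: eq_bigr => k _.
by rewrite /Gt iterDD !mulrDr polyCD mulrDl.
Qed.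

Lemma size_Cmul_le (g : {poly F}) (q : {poly {poly F}}) : (size (g%:P * q)%R <= size q)%N.
Proof.
have [->|gnz] := eqVneq g 0; first by rewrite polyC0 mul0r size_poly0.
by rewrite mul_polyC size_scale.
Qed.

Lemma RCl (f : {poly F}) g q : R f (g%:P * q) = g%:P * R f q.
Proof.
rewrite -(RB_R f (size_Cmul_le g q)) /R /RB mulr_sumr; apply: eq_bigr => i _.
rewrite mulr_sumr; apply: eq_bigr => k _.
by rewrite /Gt coefCM -mulrA polyCM mulrA.
Qed.

Lemma Rconst f (c : {poly F}) : R f c%:P = (c * f)%:P.
Proof.
rewrite -(RB_R f (size_polyC_leq1 c)) /RB !big_ord1 /Gt /=.
by rewrite coefC /= bin0 mul1r expr0 mulr1.
Qed.

Lemma size_mulX_le (q : {poly {poly F}}) : (size (q * 'X)%R <= (size q).+1)%N.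
Proof.
have [->|qnz] := eqVneq q 0; first by rewrite mul0r size_poly0.
by rewrite size_mulX.
Qed.

Lemma RX (f : {poly F}) q : R f (q * 'X) = R f q * 'X + R (D f) q.
Proof.
set N := size q.
have H1 : (size q <= N.+1)%N by rewrite leqW.
rewrite -(RB_R f (size_mulX_le q)) -(RB_R f H1) -/(RB N (D f) q) /RB.
rewrite big_ord_recl /= big1; last by move=> k _; rewrite /Gt coefMX /= mul0r polyC0 mul0r.
rewrite add0r (@big_ord_recr _ _ _ N (fun i => \sum_(k < N.+1) Gt f q i k)) /=.
rewrite (_ : \sum_(k < N.+1) Gt f q N k = 0) ?addr0; last by apply: big1 => k _; apply: Gt_zero1.
rewrite mulr_suml -big_split; apply: eq_bigr => i _.
rewrite mulr_suml !big_ord_recl /= -addrA; congr (_ + _).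
  by rewrite /Gt coefMX /= !bin0 !subn0 exprSr mulrA.
rewrite -big_split; apply: eq_bigr => k _ /=.
rewrite /Gt coefMX /= /bump /= !add1n binS natrD !mulrDl !mulrDr polyCD mulrDl.
rewrite !add0n -!iterS !iterSr subSS; congr (_ + _).
have [ki|ik] := ltnP k i.
  by rewrite -mulrA -exprSr subnSK.
by rewrite bin_small ?ltnS // mul0r mulr0 polyC0 !mul0r.
Qed.

Lemma Rmul q : forall f g, R (f * g) q = R g (R f q).
Proof.
elim/poly_ind: q => [|p c IH] f g; first by rewrite !R0q.
rewrite !Radd !RX !Rconst !Radd !RX DM Rfadd (IH f g) (IH (D f) g) (IH f (D g)) -mulrA.
by rewrite -!addrA; congr (_ + _); rewrite addrCA.
Qed.

Lemma RC (c : F) q : R c%:P q = c%:P%:P * q.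
Proof.
elim/poly_ind: q => [|p d IH]; first by rewrite R0q mulr0.
rewrite Radd RX DC R0f addr0 IH Rconst mulrDr mulrA -polyCM mulrC.
by rewrite [(d * _)]mulrC.
Qed.

Lemma polyN (q : {poly {poly F}}) (N : nat) : (size q <= N)%N ->
  q = \sum_(i < N) (q`_i)%:P * 'X^i.
Proof.
move=> H; rewrite -[LHS]coefK poly_def (widen0 (fun i => q`_i *: 'X^i) H).
  by apply: eq_bigr => i _; rewrite mul_polyC.
by move=> k Hk; rewrite nth_default // scale0r.
Qed.

Lemma Amul_Cl f q : Amul h (Apoly f) q = f%:P * q.
Proof.
rewrite /Amul /Apoly size_polyC.
have [->|fnz] := eqVneq f 0; first by rewrite big_ord0 polyC0 mul0r.
have Hq := @polyN q _ (leqnn (size q)).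
rewrite big_ord1 [in RHS]Hq mulr_sumr.
apply: eq_bigr => j _; rewrite big_ord1 /= coefC /= mul1r add0n.
by rewrite polyCM mulrA.
Qed.

Lemma Amul_Cr f q : Amul h q (Apoly f) = R f q.
Proof.
rewrite /Amul /Apoly size_polyC.
have [->|fnz] := eqVneq f 0.
  by rewrite R0f; apply: big1 => i _; rewrite big_ord0.
rewrite /R /RB; apply: eq_bigr => i _; rewrite big_ord1 coefC /=.
rewrite -(widen0 (Gt f q i) (ltn_ord i)); first by apply: eq_bigr => k _; rewrite /Gt addn0.
move=> k Hk.
by rewrite /Gt bin_small // mul0r mulr0 polyC0 mul0r.
Qed.

Lemma Acomm_C f q : Acomm h (Apoly f) q = f%:P * q - R f q.
Proof. by rewrite /Acomm Amul_Cl Amul_Cr. Qed.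

Lemma key f : forall q, exists a, Acomm h (Apoly f) q = Acomm h (Ax F) a.
Proof.
elim/poly_ind: f => [|p c IH] q.
  exists 0; rewrite -/(Apoly 'X) !Acomm_C R0f R0q polyC0 !mul0r mulr0.
  by rewrite subrr.
have [a0 E] := IH q.
exists ('X%:P * a0 + R p q).
rewrite -/(Apoly 'X) !Acomm_C in E *.
rewrite Rfadd RC Rmul Radd RCl polyCD polyCM.
move: (R 'X (R p q)) => s; move: (R 'X a0) E => t E.
rewrite (_ : R p q = p%:P * q - ('X%:P * a0 - t)); last by rewrite -E; ring.
ring.
Qed.

End Helpers.

Theorem lemma2p2 (F : fieldType) (h : {poly F}) (hnz : h != 0)
    (b : {poly {poly F}}) :
  comm_span h (fun s => exists f : {poly F}, s = Apoly f) (fun _ => True) b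
  <-> exists a : {poly {poly F}}, b = Acomm h (Ax F) a.
Proof.
split.
  move=> [n [c [s [t [Hst ->]]]]].
  apply: (big_ind (fun b => exists a, b = Acomm h (Ax F) a)).
  - exists 0; rewrite -/(Apoly 'X) Acomm_C R0q mulr0 subrr; by [].
  - move=> x y [a1 ->] [a2 ->]; exists (a1 + a2).
    by rewrite -/(Apoly 'X) !Acomm_C Radd mulrDr; ring.
  - move=> i _; case: (Hst i) => [[f ->] _].
    have [a ->] := @key F h f (t i).
    exists ((c i)%:P%:P * a).
    by rewrite -/(Apoly 'X) !Acomm_C RCl mulrBr mulrCA.
move=> [a ->]; exists 1%N, (fun _ => 1), (fun _ => Ax F), (fun _ => a); split.
  by move=> i; split => //; exists 'X.
by rewrite big_ord1 !polyC1 mul1r.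
Qed.
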